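(* For any $\alpha>0$ and $\epsilon>0$, there is no $\epsilon$-differentially private (central model) $(\alpha, 0.01m^2)$-approximation algorithm for rank aggregation when $n=o(m/\epsilon)$.
   Context: Items are $[m]=\{1,\dots,m\}$; $\mathbb{S}_m$ is the set of rankings (permutations) of $[m]$, $\pi(j)$ being the position of item $j$. The Kendall tau distance is $K(\pi_1,\pi_2)=|\{(i,j):\pi_1(i)<\pi_1(j),\ \pi_2(i)>\pi_2(j)\}|$. An input is a list $\Pi=\{\pi_1,\dots,\pi_n\}$ of $n$ rankings. Define $\bar K(\sigma,\Pi)=\frac1n\sum_k K(\sigma,\pi_k)$ and $\mathrm{OPT}(\Pi)=\min_\sigma\bar K(\sigma,\Pi)$. A randomized algorithm is an $(\alpha,\beta)$-approximation algorithm if for every input $\Pi$ its output $\sigma$ satisfies $\mathbb{E}[\bar K(\sigma,\Pi)]\le\alpha\,\mathrm{OPT}(\Pi)+\beta$. Two inputs are neighboring if they differ in a single ranking; an algorithm $\mathcal{M}$ is $\epsilon$-DP (central model) if for all neighboring $\Pi,\Pi'$ and all output sets $S$, $\Pr[\mathcal{M}(\Pi)\in S]\le e^{\epsilon}\Pr[\mathcal{M}(\Pi')\in S]$. *)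

(* Defs.v *)
From HB Require Import structures.
From mathcomp Require Import all_boot all_order all_algebra all_fingroup.
From mathcomp Require Import reals sequences exp.
Set Implicit Arguments. Unset Strict Implicit. Unset Printing Implicit Defensive.
Import Order.TTheory GRing.Theory Num.Theory.
Local Open Scope ring_scope.

(* A ranking of [m] = {0,..,m-1} is a permutation pi : 'S_m; pi j is the
   position of item j. *)

Definition kendall (m : nat) (p1 p2 : 'S_m) : nat :=
  #|[set ij : 'I_m * 'I_m |
      ((p1 ij.1 < p1 ij.2)%N && (p2 ij.2 < p2 ij.1)%N)]|.

Definition profile (n m : nat) := {ffun 'I_n -> 'S_m}.

Definition Kbar {R : realType} (n m : nat) (sigma : 'S_m) (Pi : profile n m) : R :=
  (\sum_(k < n) (kendall sigma (Pi k))%:R) / n%:R.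

Definition OPT {R : realType} (n m : nat) (Pi : profile n m) : R :=
  \big[Order.min/(Kbar 1 Pi : R)]_(sigma : 'S_m) Kbar sigma Pi.

(* A randomized algorithm is given by its output distribution on each input. *)
Definition is_distr {R : realType} (m : nat) (d : {ffun 'S_m -> R}) : Prop :=
  (forall s, 0 <= d s) /\ \sum_s d s = 1.

Definition is_mechanism {R : realType} (n m : nat)
  (M : profile n m -> {ffun 'S_m -> R}) : Prop :=
  forall Pi, is_distr (M Pi).

Definition expected_Kbar {R : realType} (n m : nat)
  (M : profile n m -> {ffun 'S_m -> R}) (Pi : profile n m) : R :=
  \sum_(s : 'S_m) M Pi s * Kbar s Pi.

Definition approx_alg {R : realType} (n m : nat)
  (M : profile n m -> {ffun 'S_m -> R}) (alpha beta : R) : Prop :=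
  forall Pi, expected_Kbar M Pi <= alpha * OPT Pi + beta.

Definition neighboring (n m : nat) (Pi Pi' : profile n m) : Prop :=
  (#|[set k | Pi k != Pi' k]| <= 1)%N.

Definition eps_DP {R : realType} (n m : nat)
  (M : profile n m -> {ffun 'S_m -> R}) (eps : R) : Prop :=
  forall Pi Pi', neighboring Pi Pi' ->
  forall S : {set 'S_m},
    \sum_(s in S) M Pi s <= expR eps * \sum_(s in S) M Pi' s.

(* Main.v *)
Require Import Defs.
From HB Require Import structures.
From mathcomp Require Import all_boot all_order all_algebra all_fingroup.
From mathcomp Require Import reals sequences exp.
From mathcomp Require Import zify ring lra.
Import Order.TTheory GRing.Theory Num.Theory.

Set Implicit Arguments. Unset Strict Implicit. Unset Printing Implicit Defensive.
Definition notmid (m h : nat) (a : 'I_m) : bool := (a < h) || (rev_ord a < h).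
Definition cflip (m h : nat) (x : {ffun 'I_m -> bool}) (a : 'I_m) : bool :=
  ((a < h) && x a) || ((rev_ord a < h) && x (rev_ord a)).
Definition fx (m h : nat) (x : {ffun 'I_m -> bool}) (a : 'I_m) : 'I_m :=
  if cflip h x a then rev_ord a else a.

Lemma cflip_rev m h x a : @cflip m h x (rev_ord a) = cflip h x a.
Proof. by rewrite /cflip rev_ordK orbC. Qed.

Lemma fxK m h x : involutive (@fx m h x).
Proof.
move=> a; rewrite /fx; case E: (cflip h x a).
  by rewrite cflip_rev E rev_ordK.
by rewrite E.
Qed.

Definition pix (m h : nat) (x : {ffun 'I_m -> bool}) : 'S_m :=
  perm (can_inj (@fxK m h x)).

Lemma pixE m h x a : @pix m h x a = fx h x a.
Proof. by rewrite /pix permE. Qed.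

Lemma revE m (a : 'I_m) : nat_of_ord (rev_ord a) = m - a.+1.
Proof. by []. Qed.

Definition disc m (s p : 'S_m) (a b : 'I_m) : bool := (s a < s b) && (p b < p a).

Lemma kendallE m (s p : 'S_m) : kendall s p = \sum_a \sum_b disc s p a b.
Proof.
rewrite /kendall -sum1_card pair_big /=.
rewrite big_mkcond /=; apply: eq_bigr => -[a b] _ /=.
by rewrite inE /disc /=; case: ifP.
Qed.

Definition mid m h (b : 'I_m) := ~~ notmid h b.

Lemma pix_mid m h x (b : 'I_m) : mid h b -> @pix m h x b = b.
Proof.
rewrite /mid /notmid negb_or => /andP[H1 H2].
by rewrite pixE /fx /cflip (negbTE H1) (negbTE H2).
Qed.

Lemma pix_cases m h x (a : 'I_m) : @pix m h x a = a \/ pix h x a = rev_ord a.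
Proof. by rewrite pixE /fx; case: ifP; [right|left]. Qed.

Lemma disc_mid m h x (s : 'S_m) (a b : 'I_m) : notmid h a -> mid h b ->
  disc s (pix h x) a b + disc s (pix h x) b a =
  if (pix h x a < h)%N then nat_of_bool (s b < s a)%N else nat_of_bool (s a < s b)%N.
Proof.
move=> Ha Hb; rewrite /disc (@pix_mid _ _ x _ Hb).
have Hp : ((pix h x a < h) || (m - (pix h x a).+1 < h))%N.
  have := ltn_ord a; move: Ha; rewrite /notmid !revE.
  by case: (@pix_cases _ h x a) => -> /=; lia.
move: Hb; rewrite /mid /notmid negb_or revE => /andP[Hb1 Hb2].
have := ltn_ord b; have := ltn_ord (pix h x a).
case: ifP => Hph.
  have -> : (b < pix h x a)%N = false by apply/negbTE; rewrite -leqNgt; lia.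
  have -> : (pix h x a < b)%N by lia.
  by rewrite andbF andbT ?addn0.

have -> : (b < pix h x a)%N by lia.
have -> : (pix h x a < b)%N = false by apply/negbTE; rewrite -leqNgt; lia.
by rewrite andbF andbT addn0.
Qed.

Definition Gs m h (s : 'S_m) x (a : 'I_m) : nat :=
  \sum_b mid h b * (disc s (@pix m h x) a b + disc s (pix h x) b a).
Definition r1 m h (s : 'S_m) (a : 'I_m) : nat := \sum_b mid h b * (s b < s a)%N.
Definition r2 m h (s : 'S_m) (a : 'I_m) : nat := \sum_b mid h b * (s a < s b)%N.
Definition Wm m h : nat := \sum_(b : 'I_m) mid h b.

Lemma Gs_eq m h s x (a : 'I_m) : notmid h a ->
  Gs h s x a = if (pix h x a < h)%N then r1 h s a else r2 h s a.
Proof.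
move=> Ha; rewrite /Gs /r1 /r2; case: ifP => Hp; apply: eq_bigr => b _;
  (case Hb: (mid h b); [by rewrite (disc_mid _ _ Ha Hb) Hp | by rewrite !mul0n]).
Qed.

Lemma r12 m h s (a : 'I_m) : notmid h a -> r1 h s a + r2 h s a = Wm m h.
Proof.
move=> Ha; rewrite /r1 /r2 /Wm -big_split /=; apply: eq_bigr => b _.
case Hb: (mid h b); rewrite ?mul0n // !mul1n.
have hab : b != a by apply: contraTneq Hb => ->; rewrite /mid Ha.
have : s b != s a by rewrite (inj_eq perm_inj).
rewrite neq_ltn => /orP[H|H]; first by rewrite H [(s a < s b)%N]ltnNge (ltnW H).
by rewrite H [(s b < s a)%N]ltnNge (ltnW H).
Qed.

Lemma kendall_ge m h s x :
  (\sum_a notmid h a * @Gs m h s x a <= kendall s (pix h x))%N.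
Proof.
rewrite kendallE.
set p := pix h x.
have E1 : \sum_a notmid h a * Gs h s x a =
   \sum_a \sum_b (notmid h a * mid h b * disc s p a b)
 + \sum_a \sum_b (mid h a * notmid h b * disc s p a b).
  rewrite [X in _ = _ + X]exchange_big /= -big_split /=.
  apply: eq_bigr => a _; rewrite /Gs big_distrr -big_split /=.
  by apply: eq_bigr => b _; rewrite !mulnDr !mulnA (mulnC (mid h b)).
rewrite E1 -big_split /=; apply: leq_sum => a _; rewrite -big_split /=.
apply: leq_sum => b _.
rewrite /mid; case: (notmid h a); case: (notmid h b); case: (disc s p a b) => //.
Qed.

Lemma pair_sum m h (F : 'I_m -> nat) : (2 * h <= m)%N ->
  \sum_a notmid h a * F a = \sum_(a : 'I_m) (a < h)%N * (F a + F (rev_ord a)).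
Proof.
move=> hm.
have -> : \sum_a notmid h a * F a =
   \sum_(a : 'I_m) (a < h)%N * F a + \sum_(a : 'I_m) (rev_ord a < h)%N * F a.
  rewrite -big_split /=; apply: eq_bigr => a _; rewrite /notmid.
  have := ltn_ord a; rewrite revE.
  case: (ltnP a h) => H1; case: (ltnP (m - a.+1) h) => H2 //= _; try lia;
    by rewrite ?mul0n ?mul1n ?addn0.
rewrite [X in _ + X](reindex_inj rev_ord_inj) /= -big_split /=.
apply: eq_bigr => a _; have := ltn_ord a => Ha.
have -> : (m - (m - a.+1).+1) = a by lia.
by rewrite mulnDr.
Qed.

Definition cost0 m h (s : 'S_m) (i : 'I_m) := r1 h s i + r2 h s (rev_ord i).
Definition cost1 m h (s : 'S_m) (i : 'I_m) := r2 h s i + r1 h s (rev_ord i).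
Definition ybit m h (s : 'S_m) (i : 'I_m) : bool := (cost1 h s i < cost0 h s i)%N.

Lemma pair_cost m h s (x : {ffun 'I_m -> bool}) (i : 'I_m) : (2 * h <= m)%N -> (i < h)%N ->
  (Wm m h * (x i != ybit h s i) <= Gs h s x i + Gs h s x (rev_ord i))%N.
Proof.
move=> hm hi.
have ni : notmid h i by rewrite /notmid hi.
have nri : notmid h (rev_ord i) by rewrite /notmid rev_ordK hi orbT.
have hri : (rev_ord i < h)%N = false.
  by apply/negbTE; rewrite -leqNgt revE; have := ltn_ord i; lia.
rewrite (Gs_eq _ _ ni) (Gs_eq _ _ nri) !pixE /fx cflip_rev.
have -> : cflip h x i = x i by rewrite /cflip hi hri /= orbF.
have e1 := r12 s ni; have e2 := r12 s nri.
rewrite /ybit /cost0 /cost1 rev_ordK.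
case: (x i) => /=; rewrite ?hi ?hri /=;
  case: ltnP => H; rewrite ?muln0 ?muln1 //; lia.
Qed.

Lemma sum_lt m h : (h <= m)%N -> \sum_(i : 'I_m) ((i < h)%N : nat) = h.
Proof.
move=> hm.
rewrite -(big_mkord xpredT (fun i => ((i < h)%N : nat))).
rewrite (@big_cat_nat _ _ _ h 0 m _ _ (leq0n h) hm) /=.
rewrite big_nat_cond [X in _ + X]big_nat_cond.
rewrite (eq_bigr (fun _ => 1)); last by move=> i /andP[/andP[_ ->]].
rewrite [X in _ + X](eq_bigr (fun _ => 0)); last first.
  by move=> i /andP[/andP[H _]]; rewrite ltnNge H.
rewrite -big_nat_cond -[X in _ + X]big_nat_cond.
by rewrite !sum_nat_const_nat muln0 addn0 muln1 subn0.
Qed.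

Lemma card_lt m h : (h <= m)%N -> #|[pred i : 'I_m | (i < h)%N]| = h.
Proof.
move=> hm; rewrite -sum1_card big_mkcond /= -[RHS](sum_lt hm).
by apply: eq_bigr => i _; rewrite inE; case: ifP.
Qed.

Lemma Wm_eq m h : (2 * h <= m)%N -> Wm m h + 2 * h = m.
Proof.
move=> hm.
have E : \sum_(b : 'I_m) 1 = Wm m h + (\sum_(b : 'I_m) ((b < h)%N : nat) + \sum_(b : 'I_m) ((rev_ord b < h)%N : nat)).
  rewrite /Wm -!big_split /=; apply: eq_bigr => b _; rewrite /mid /notmid revE.
  have := ltn_ord b.
  by case: (ltnP b h) => H1; case: (ltnP (m - b.+1) h) => H2 //= _; lia.
move: E; rewrite [X in _ + (_ + X)](reindex_inj rev_ord_inj).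
under [X in _ + (_ + X)]eq_bigr => b _ do rewrite rev_ordK.
rewrite sum_lt; last by lia.
by rewrite sum1_card card_ord => E; lia.
Qed.

Definition Hd m (h : nat) (s : 'S_m) (x : {ffun 'I_m -> bool}) : nat :=
  \sum_(i : 'I_m) ((i < h)%N && (x i != ybit h s i)).

Lemma kendall_lb m h s x : (2 * h <= m)%N ->
  (Wm m h * @Hd m h s x <= kendall s (pix h x))%N.
Proof.
move=> hm; apply: leq_trans (kendall_ge h s x).
rewrite (pair_sum _ hm) /Hd big_distrr /=; apply: leq_sum => i _.
case: (ltnP i h) => Hi /=; last by rewrite muln0.
by rewrite mul1n pair_cost.
Qed.

Local Open Scope ring_scope.

Lemma group_dp (R : realType) N m (M : profile N m -> {ffun 'S_m -> R}) (eps : R)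
  (P Q : profile N m) (S : {set 'S_m}) :
  eps_DP M eps ->
  \sum_(s in S) M P s <= expR eps ^+ N * \sum_(s in S) M Q s.
Proof.
move=> dp.
pose H k : profile N m := [ffun i : 'I_N => if (i < k)%N then P i else Q i].
have step k : \sum_(s in S) M (H k.+1) s <= expR eps * \sum_(s in S) M (H k) s.
  apply: dp; rewrite /neighboring; apply/card_le1_eqP => i j.
  rewrite !inE !ffunE => Hi Hj; apply: ord_inj.
  have hi : nat_of_ord i = k.
    by move: Hi; case: (ltnP i k) => H1; case: (ltnP i k.+1) => H2; rewrite ?eqxx //; try lia; move=> _; lia.
  have hj : nat_of_ord j = k.
    by move: Hj; case: (ltnP j k) => H1; case: (ltnP j k.+1) => H2; rewrite ?eqxx //; try lia; move=> _; lia.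
  by rewrite hi hj.
have ind k : \sum_(s in S) M (H k) s <= expR eps ^+ k * \sum_(s in S) M (H 0%N) s.
  elim: k => [|k IH]; first by rewrite expr0 mul1r.
  apply: le_trans (step k) _; rewrite exprS -mulrA.
  by apply: ler_wpM2l; [exact: expR_ge0 | exact: IH].
have H0 : H 0%N = Q by apply/ffunP => i; rewrite ffunE.
have HN : H N = P by apply/ffunP => i; rewrite ffunE ltn_ord.
by rewrite -H0 -{1}HN; apply: ind.
Qed.

Lemma markov (R : realType) m (d : {ffun 'S_m -> R}) (f : 'S_m -> nat) (T : nat) (beta : R) :
  is_distr d -> \sum_s d s * (f s)%:R <= beta -> beta <= (T.+1)%:R / 2 ->
  1 / 2 <= \sum_(s in [set s | (f s <= T)%N]) d s.
Proof.
move=> [d0 d1] hb hT.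
have E : \sum_s d s = \sum_(s in [set s | (f s <= T)%N]) d s + \sum_(s | ~~ (f s <= T)%N) d s.
  rewrite (bigID (fun s => (f s <= T)%N)) /=; congr (_ + _).
  by apply: eq_bigl => s; rewrite inE.
have H1 : \sum_(s | ~~ (f s <= T)%N) d s * (T.+1)%:R <= beta.
  apply: le_trans hb.
  apply: le_trans (_ : \sum_(s | ~~ (f s <= T)%N) d s * (f s)%:R <= _).
    apply: ler_sum => s; rewrite -ltnNge => Hs; apply: ler_wpM2l => //.
    by rewrite ler_nat.
  rewrite [X in _ <= X](bigID (fun s => ~~ (f s <= T)%N)) /= lerDl.
  by apply: sumr_ge0 => s _; apply: mulr_ge0 => //.
have H2 : \sum_(s | ~~ (f s <= T)%N) d s <= 1 / 2.
  rewrite -big_distrl /= in H1.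
  have hp : 0 < (T.+1)%:R :> R by rewrite ltr0n.
  rewrite -(ler_pM2r hp); apply: le_trans H1 _; apply: le_trans hT _.
  by rewrite mulrC mul1r.
move: E; rewrite d1 => E.
have -> : \sum_(s in [set s | (f s <= T)%N]) d s = 1 - \sum_(s | ~~ (f s <= T)%N) d s.
  by rewrite E addrK.
rewrite lerBrDr; apply: le_trans (_ : 1/2 + 1/2 <= _); first by rewrite lerD2l.
by rewrite -mulrDl -[1 + 1]/2%:R divrr // unitfE pnatr_eq0.
Qed.

Lemma sum_ffun_prod (R : realType) m (F : 'I_m -> bool -> R) :
  \sum_(x : {ffun 'I_m -> bool}) \prod_i F i (x i) = \prod_i (F i true + F i false).
Proof.
rewrite -bigA_distr_bigA /=; apply: eq_bigr => i _; by rewrite big_bool.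
Qed.

Lemma sum_half (R : realType) m h (s : 'S_m) :
  \sum_(x : {ffun 'I_m -> bool}) (2^-1 : R) ^+ (Hd h s x) =
  \prod_(i : 'I_m) (if (i < h)%N then 1 + 2^-1 else 2).
Proof.
rewrite /Hd; under eq_bigr => x _ do rewrite expr_sum.
rewrite (sum_ffun_prod (fun i b => (2^-1 : R) ^+ ((i < h)%N && (b != ybit h s i)))).
apply: eq_bigr => i _; case: (i < h)%N => /=; last by rewrite expr0.
by case: (ybit h s i) => /=; rewrite expr0 expr1 // addrC.
Qed.

Lemma sum_one (R : realType) m :
  \sum_(x : {ffun 'I_m -> bool}) (1 : R) = \prod_(i : 'I_m) 2.
Proof.
have e : forall x : {ffun 'I_m -> bool}, (1 : R) = \prod_(i : 'I_m) (fun _ _ => 1 : R) i (x i).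
  by move=> x; rewrite big1.
rewrite (eq_bigr _ (fun x _ => e x)) (sum_ffun_prod (fun (_ : 'I_m) (_ : bool) => 1 : R)).
by apply: eq_bigr => i _.
Qed.

Lemma prod_split (R : realType) m h : (h <= m)%N ->
  \prod_(i : 'I_m) (if (i < h)%N then 1 + 2^-1 else 2 : R) =
  \prod_(i : 'I_m) 2 * (3 / 4) ^+ h.
Proof.
move=> hm.
rewrite (eq_bigr (fun i : 'I_m => 2 * (if (i < h)%N then 3/4 else 1 : R))); last first.
  by move=> i _; case: ifP => _; [lra | rewrite mulr1].
rewrite big_split /=; congr (_ * _).
rewrite -big_mkcond /= prodr_const.
by rewrite (card_lt hm).
Qed.

Lemma weight_ge1 (R : realType) (W H T : nat) : (0 < W)%N -> (W * H <= T)%N ->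
  1 <= (2 : R) ^+ (T %/ W) * (2^-1) ^+ H.
Proof.
move=> W0 hWH.
have hH : (H <= T %/ W)%N by rewrite leq_divRL // mulnC.
rewrite exprVn ler_pdivlMr ?exprn_gt0 // mul1r.
by rewrite ler_eXn2l // ltr1n.
Qed.

Lemma count_bound (R : realType) m h (s : 'S_m) (T : nat) (d : R) :
  (2 * h <= m)%N -> (0 < Wm m h)%N -> 0 <= d ->
  \sum_(x : {ffun 'I_m -> bool}) (if (kendall s (pix h x) <= T)%N then d else 0)
  <= d * 2 ^+ (T %/ Wm m h) * \prod_(i : 'I_m) (if (i < h)%N then 1 + 2^-1 else 2).
Proof.
move=> hm W0 d0.
rewrite -(sum_half R h s) big_distrr /=; apply: ler_sum => x _.
case: ifP => HK; last first.
  by apply: mulr_ge0; [apply: mulr_ge0 => //; apply: exprn_ge0 | apply: exprn_ge0; rewrite invr_ge0].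
rewrite -mulrA -{1}[d]mulr1; apply: ler_wpM2l => //.
apply: weight_ge1 => //.
exact: leq_trans (kendall_lb s x hm) HK.
Qed.

Lemma numeric_q (R : realType) (EN q : R) (m h Rr : nat) : 0 <= EN -> 0 <= q ->
  q ^+ 5 <= (2^-1) ^+ 2 -> EN ^+ 40 <= 2 ^+ m ->
  (25 * Rr <= m)%N -> (m <= 4 * h + 3)%N -> (60 <= m)%N ->
  2^-1 <= EN * 2 ^+ Rr * q ^+ h -> False.
Proof.
move=> E0 q0 c34 E40 hR hh hm K.
have K40 : (2^-1 : R) ^+ 40 <= (EN * 2 ^+ Rr * q ^+ h) ^+ 40.
  apply: lerXn2r K; first by rewrite nnegrE invr_ge0 ler0n.
  rewrite nnegrE; apply: mulr_ge0; last exact: exprn_ge0.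
  by apply: mulr_ge0 => //; apply: exprn_ge0; exact: ler0n.
rewrite !exprMn -!exprM in K40.
have K40' : (2^-1 : R) ^+ 40 <= 2 ^+ m * 2 ^+ (2 * m) * (2^-1) ^+ (16 * h).
  apply: (le_trans K40).
  have p0 : forall k, (0 : R) <= 2 ^+ k by move=> k; apply: exprn_ge0; exact: ler0n.
  apply: ler_pM.
  - by apply: mulr_ge0; [exact: exprn_ge0| exact: p0].
  - exact: exprn_ge0.
  - apply: ler_pM => //; first exact: exprn_ge0.
    by rewrite ler_eXn2l ?ltr1n //; lia.
  have -> : (h * 40 = 5 * (8 * h))%N by lia.
  have -> : (16 * h = 2 * (8 * h))%N by lia.
  rewrite (exprM q 5) (exprM _ 2); apply: lerXn2r; last exact: c34.
    by rewrite nnegrE; apply: exprn_ge0.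
  by rewrite nnegrE; apply: exprn_ge0; rewrite invr_ge0 ler0n.
move: K40'; rewrite !exprVn ler_pdivlMr ?exprn_gt0 ?ltr0n // mulrC.
rewrite ler_pdivrMr ?exprn_gt0 ?ltr0n // -!exprD ler_eXn2l ?ltr1n //.
lia.
Qed.

Lemma kendall_self m (p : 'S_m) : kendall p p = 0%N.
Proof.
rewrite /kendall; apply/eqP; rewrite cards_eq0; apply/eqP/setP => ij.
rewrite !inE; apply/negbTE; apply/negP => /andP[H1 H2].
by have := ltn_trans H1 H2; rewrite ltnn.
Qed.

Lemma Kbar_const (R : realType) N m (p s : 'S_m) : (0 < N)%N ->
  Kbar s ([ffun _ => p] : profile N m) = (kendall s p)%:R :> R.
Proof.
move=> N0; rewrite /Kbar; under eq_bigr => k _ do rewrite ffunE.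
rewrite sumr_const card_ord -[_ *+ N]mulr_natr mulfK //.
by rewrite pnatr_eq0 -lt0n.
Qed.

Lemma OPT_const (R : realType) N m (p : 'S_m) : (0 < N)%N ->
  OPT ([ffun _ => p] : profile N m) <= 0 :> R.
Proof.
move=> N0; rewrite /OPT; apply: le_trans (bigmin_le _ p _) _.
by rewrite Kbar_const // kendall_self.
Qed.

Lemma expR_half (R : realType) : expR (2^-1 : R) <= 2.
Proof.
have H := expR_ge1Dx (- (2^-1 : R)).
rewrite expRN in H.
have e0 : 0 < expR (2^-1 : R) by apply: expR_gt0.
have : (1 - 2^-1) * expR (2^-1 : R) <= 1.
  by rewrite -ler_pdivlMr // div1r.
lra.
Qed.

Lemma c34 (R : realType) : (3/4 : R) ^+ 5 <= (2^-1) ^+ 2.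
Proof. rewrite !exprS !expr0; lra. Qed.

Unset Implicit Arguments.

Local Open Scope ring_scope.

Theorem theorem5 (R : realType) (alpha eps : R) (n : nat -> nat) :
  0 < alpha -> 0 < eps ->
  (forall c : R, 0 < c -> exists M0 : nat, forall m : nat, (M0 <= m)%N ->
      (n m)%:R <= c * (m%:R / eps)) ->
  exists M0 : nat, forall m : nat, (M0 <= m)%N -> (0 < n m)%N ->
    forall M : profile (n m) m -> {ffun 'S_m -> R},
      ~ [/\ is_mechanism M, eps_DP M eps &
            approx_alg M alpha ((1 / 100) * (m ^ 2)%:R)].
Proof.
move=> ha he hn.
have c0 : (0 : R) < 80^-1 by rewrite invr_gt0 ltr0n.
have [M1 HM1] := hn _ c0.
exists (maxn M1 60) => m hm Npos M [mech dp apx].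
have hm1 : (M1 <= m)%N by lia.
have hm60 : (60 <= m)%N by lia.
pose h := (m %/ 4)%N.
have h4 : (h * 4 <= m)%N by apply: leq_trunc_div.
have h4' : (m < h.+1 * 4)%N by apply: ltn_ceil.
have h2 : (2 * h <= m)%N by lia.
pose W := Wm m h.
have hW : (W + 2 * h = m)%N := Wm_eq h2.
have W0 : (0 < W)%N by lia.
pose T := (m ^ 2 %/ 50)%N.
have hT1 : (T * 50 <= m ^ 2)%N by apply: leq_trunc_div.
have hT2 : (m ^ 2 < T.+1 * 50)%N by apply: ltn_ceil.
pose Rr := (T %/ W)%N.
have hR1 : (Rr * W <= T)%N by apply: leq_trunc_div.
have hR : (25 * Rr <= m)%N.
  have : (25 * Rr * m <= 1 * m * m)%N by rewrite expnS expn1 in hT1; nia.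
  by rewrite mul1n leq_pmul2r //; lia.
pose px x : 'S_m := pix h x.
pose Px x : profile (n m) m := [ffun _ => px x].
pose P0 : profile (n m) m := [ffun _ => 1%g].
pose B x := [set s : 'S_m | (kendall s (px x) <= T)%N].
pose E := expR eps.
pose beta : R := (1 / 100) * (m ^ 2)%:R.
have A x : 2^-1 <= \sum_(s in B x) M (Px x) s.
  have hb : \sum_s M (Px x) s * (kendall s (px x))%:R <= beta.
    have := apx (Px x); rewrite /expected_Kbar.
    under eq_bigr => s _ do rewrite Kbar_const //.
    move=> H; apply: le_trans H _.
    have h1 : alpha * OPT (Px x) <= 0.
      by apply: mulr_ge0_le0; [exact: ltW | exact: OPT_const].
    rewrite /beta; lra.
  have hbT : beta <= (T.+1)%:R / 2.
    have : (m ^ 2 <= 50 * T.+1)%N by lia.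
    rewrite -(ler_nat R) natrM /beta => H; lra.
  have := markov (mech (Px x)) hb hbT.
  by rewrite div1r.
have Bx x : \sum_(s in B x) M (Px x) s <= E ^+ (n m) * \sum_(s in B x) M P0 s.
  exact: group_dp.
have Pi2 : \prod_(i : 'I_m) (2 : R) = 2 ^+ m by rewrite prodr_const card_ord.
have S1 : \sum_(x : {ffun 'I_m -> bool}) (2^-1 : R) = 2^-1 * 2 ^+ m.
  by rewrite -Pi2 -sum_one big_distrr /=; apply: eq_bigr => x _; rewrite mulr1.
have S2 : \sum_(x : {ffun 'I_m -> bool}) \sum_(s in B x) M P0 s
    <= 2 ^+ Rr * (2 ^+ m * (3/4) ^+ h).
  rewrite -Pi2 -prod_split; last by lia.
  under eq_bigr => x _ do rewrite big_mkcond /=.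
  rewrite exchange_big /=.
  apply: le_trans (_ : \sum_s M P0 s * 2 ^+ Rr *
      \prod_(i : 'I_m) (if (i < h)%N then 1 + 2^-1 else 2) <= _).
    apply: ler_sum => s _.
    rewrite (eq_bigr (fun x => if (kendall s (px x) <= T)%N then M P0 s else 0)).
      apply: count_bound => //; by case: (mech P0).
    by move=> x _; rewrite inE.
  by rewrite -big_distrl -big_distrl /= (proj2 (mech P0)) mul1r.
have key : 2^-1 <= E ^+ (n m) * 2 ^+ Rr * (3/4) ^+ h.
  have : 2^-1 * 2 ^+ m <= E ^+ (n m) * (2 ^+ Rr * (2 ^+ m * (3/4) ^+ h)).
    rewrite -S1; apply: le_trans (_ : \sum_(x : {ffun 'I_m -> bool})
        E ^+ (n m) * \sum_(s in B x) M P0 s <= _).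
      by apply: ler_sum => x _; apply: le_trans (A x) (Bx x).
    rewrite -big_distrr /=; apply: ler_wpM2l => //.
    by apply: exprn_ge0; apply: expR_ge0.
  rewrite [2 ^+ m * _]mulrC !mulrA -ler_pdivlMr ?exprn_gt0 ?ltr0n //.
  by rewrite mulfK // expf_neq0 // pnatr_eq0.
have hN : (n m)%:R * eps <= 80^-1 * m%:R.
  have := ler_wpM2r (ltW he) (HM1 m hm1).
  by rewrite -mulrA mulfVK // gt_eqF.
have E40 : (E ^+ (n m)) ^+ 40 <= 2 ^+ m.
  rewrite /E -expRM_natl -expRM_natl.
  apply: le_trans (_ : expR (m%:R * 2^-1) <= _).
    by rewrite ler_expR; lra.
  rewrite expRM_natl; apply: lerXn2r; rewrite ?nnegrE ?ler0n ?expR_ge0 //.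
  exact: expR_half.
apply: (numeric_q (EN := E ^+ (n m)) (q := 3/4) _ _ (c34 R) E40 hR _ hm60 key).
- by apply: exprn_ge0; apply: expR_ge0.
- lra.
- lia.
Qed.
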